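(* Let $I\subset\mathbb{R}$ be an open interval, $W\subset I$ countable, and $\hat I$ the divided interval of $I$ at $W$. If $\mathcal{F}$ is a $G$ local system on $\hat I$ (for any $k$-linear group $G$), then for every basis interval $H\subset\hat I$ the restriction map $\mathcal{F}(H)\to\mathcal{F}(\operatorname{trim} H)$ is an isomorphism.
   Context: The divided interval of $I$ at $W$ is the set $\hat I = \{w^{L}, \hat w, w^{R} : w\in W\}\sqcup (I\smallsetminus W)$, with $\pi\colon\hat I\to I$ sending $w^L,\hat w,w^R$ to $w$ and fixing $I\smallsetminus W$; it is totally ordered so that $\pi$ is order preserving and $w^L<\hat w<w^R$. For $a,b\in\hat I\cup\{\pm\infty\}$, $(a,b)=\{s: a<s<b\}$; basis intervals are the nonempty $(a,b)$ other than those with $a=w^L$ or $b=w^R$, and they generate the topology of $\hat I$. For a basis interval $H$, $\operatorname{trim}H$ is $H$ with its least element and its greatest element removed (if they exist); it is again a basis interval. A $k$-linear group $G$ is a subgroup of $\mathrm{GL}(R_G)$ for a finite-dimensional $k$-vector space $R_G$; $\mathcal{C}_G$ is the smallest subcategory of $k$-vector spaces containing $R_G$ and the morphisms $G$ and having all limits and filtered colimits; a $G$ local system is a locally constant sheaf with values in $\mathcal{C}_G$ all of whose stalks are isomorphic to $R_G$. *)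

(* Defs.v *)
From HB Require Import structures.
From mathcomp Require Import all_boot all_order all_algebra.
From mathcomp Require Import all_classical all_reals.
Set Implicit Arguments. Unset Strict Implicit. Unset Printing Implicit Defensive.
Import Order.TTheory GRing.Theory Num.Theory.
Local Open Scope classical_set_scope.
Local Open Scope ring_scope.

Definition open_interval (R : realType) (I : set R) : Prop :=
  exists a b : \bar R, I = [set x | (a < x%:E)%E /\ (x%:E < b)%E].

(* An element is a pair (x, t) with x in I and t in {0,1,2}; for x in W the  *)
(* tags 0,1,2 stand for x^L, \hat x, x^R; for x in I \ W only the tag 1 is   *)
(* allowed (the point x itself).  pi = first projection.                      *)
Section Divided.
Variables (R : realType) (I W : set R).

Definition hatI : Type :=
  {p : R * 'I_3 | I p.1 /\ (~ W p.1 -> nat_of_ord p.2 = 1%N)}.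

Definition hpi (s : hatI) : R := (sval s).1.
Definition htag (s : hatI) : nat := nat_of_ord (sval s).2.

(* total order: pi order preserving and w^L < \hat w < w^R *)
Definition hlt (s t : hatI) : Prop :=
  hpi s < hpi t \/ (hpi s = hpi t /\ (htag s < htag t)%N).

Inductive hext := HNegInf | HPt of hatI | HPosInf.

Definition hext_lt (a : hext) (s : hatI) : Prop :=
  match a with HNegInf => True | HPt x => hlt x s | HPosInf => False end.
Definition hext_gt (b : hext) (s : hatI) : Prop :=
  match b with HNegInf => False | HPt x => hlt s x | HPosInf => True end.

Definition hinterval (a b : hext) : set hatI :=
  [set s | hext_lt a s /\ hext_gt b s].

Definition is_left_copy (a : hext) : Prop :=
  match a with HPt x => W (hpi x) /\ htag x = 0%N | _ => False end.
Definition is_right_copy (b : hext) : Prop :=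
  match b with HPt x => W (hpi x) /\ htag x = 2%N | _ => False end.

Definition basis_interval (H : set hatI) : Prop :=
  exists a b : hext, H = hinterval a b /\ hinterval a b !=set0 /\
    ~ is_left_copy a /\ ~ is_right_copy b.

Definition hopen (U : set hatI) : Prop :=
  forall T : set hatI -> Prop,
    (forall H, basis_interval H -> T H) ->
    T setT ->
    (forall A B, T A -> T B -> T (A `&` B)) ->
    (forall (J : Type) (F : J -> set hatI), (forall j, T (F j)) ->
        T (\bigcup_j F j)) ->
    T U.

Definition hle (s t : hatI) : Prop := s = t \/ hlt s t.
Definition least_of (H : set hatI) (s : hatI) : Prop :=
  H s /\ forall t, H t -> hle s t.
Definition greatest_of (H : set hatI) (s : hatI) : Prop :=
  H s /\ forall t, H t -> hle t s.
Definition trim (H : set hatI) : set hatI :=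
  [set s | H s /\ ~ least_of H s /\ ~ greatest_of H s].

Lemma trim_sub (H : set hatI) : trim H `<=` H.
Proof. by move=> s [] . Qed.

End Divided.

Section LinearGroup.
Variables (k : fieldType).

Definition linear_group (RG : vectType k) (G : (RG -> RG) -> Prop) : Prop :=
  [/\ forall g, G g -> linear g /\ bijective g,
      G id,
      forall g h, G g -> G h -> G (g \o h) &
      forall g, G g -> exists2 h, G h & cancel g h /\ cancel h g].

Record smallcat := SmallCat {
  cobj : Type;
  chom : cobj -> cobj -> Type;
  cid : forall i, chom i i;
  ccomp : forall i j l, chom j l -> chom i j -> chom i l;
  cid_l : forall i j (f : chom i j), ccomp (cid j) f = f;
  cid_r : forall i j (f : chom i j), ccomp f (cid i) = f;
  ccompA : forall i j l m (f : chom l m) (g : chom j l) (h : chom i j),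
      ccomp f (ccomp g h) = ccomp (ccomp f g) h }.

Record diagram (J : smallcat) := Diagram {
  dobj : cobj J -> lmodType k;
  dmap : forall i j, chom i j -> dobj i -> dobj j;
  dmap_lin : forall i j (f : chom i j), linear (dmap f);
  dmap_id : forall i x, dmap (cid i) x = x;
  dmap_comp : forall i j l (f : chom j l) (g : chom i j) x,
      dmap (ccomp f g) x = dmap f (dmap g x) }.
Arguments dobj {J} d i.
Arguments dmap {J} d {i j} _ _.

Definition is_limit (J : smallcat) (D : diagram J) (L : lmodType k)
    (p : forall i, L -> dobj D i) : Prop :=
  (forall i, linear (p i)) /\
  (forall i j (f : chom i j) x, dmap D f (p i x) = p j x) /\
  (forall x : forall i, dobj D i,
      (forall i j (f : chom i j), dmap D f (x i) = x j) ->
      exists! l : L, forall i, p i l = x i).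

Arguments is_limit {J} D L p.

Definition filtered (J : smallcat) : Prop :=
  [/\ inhabited (cobj J),
      forall i j : cobj J, exists l, inhabited (chom i l) /\ inhabited (chom j l) &
      forall (i j : cobj J) (f g : chom i j), exists l (h : chom j l),
         ccomp h f = ccomp h g].

Definition is_filtered_colimit (J : smallcat) (D : diagram J) (C : lmodType k)
    (q : forall i, dobj D i -> C) : Prop :=
  (forall i, linear (q i)) /\
  (forall i j (f : chom i j) x, q j (dmap D f x) = q i x) /\
  (forall c : C, exists i x, q i x = c) /\
  (forall i j x y, q i x = q j y ->
      exists l (f : chom i l) (g : chom j l), dmap D f x = dmap D g y).

Arguments is_filtered_colimit {J} D C q.

Definition Objs := lmodType k -> Prop.
Definition Mors := forall V W : lmodType k, (V -> W) -> Prop.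

Definition CG_closed (RG : vectType k) (G : (RG -> RG) -> Prop)
    (Ob : Objs) (Mor : Mors) : Prop :=
  [/\ forall (V W : lmodType k) (f : V -> W), Mor V W f -> Ob V /\ Ob W /\ linear f,
      (forall V : lmodType k, Ob V -> Mor V V id) /\
      (forall (U V W : lmodType k) (f : V -> W) (g : U -> V), Mor V W f -> Mor U V g ->
          Mor U W (f \o g)),
      Ob (RG : lmodType k) /\ (forall g, G g -> Mor RG RG g),
      forall (J : smallcat) (D : diagram J),
        (forall i, Ob (dobj D i)) ->
        (forall i j (f : chom i j), Mor _ _ (dmap D f)) ->
        forall L p, is_limit D L p ->
          Ob L /\ (forall i, Mor _ _ (p i)) /\
          (forall (V : lmodType k) (c : forall i, V -> dobj D i) (m : V -> L),
             Ob V -> (forall i, Mor _ _ (c i)) ->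
             (forall v i, p i (m v) = c i v) -> Mor _ _ m) &
      forall (J : smallcat) (D : diagram J), filtered J ->
        (forall i, Ob (dobj D i)) ->
        (forall i j (f : chom i j), Mor _ _ (dmap D f)) ->
        forall C q, is_filtered_colimit D C q ->
          Ob C /\ (forall i, Mor _ _ (q i)) /\
          (forall (V : lmodType k) (c : forall i, dobj D i -> V) (m : C -> V),
             Ob V -> (forall i, Mor _ _ (c i)) ->
             (forall i x, m (q i x) = c i x) -> Mor _ _ m)].

Definition CG_obj (RG : vectType k) (G : (RG -> RG) -> Prop) (V : lmodType k)
  : Prop := forall Ob Mor, CG_closed G Ob Mor -> Ob V.
Definition CG_mor (RG : vectType k) (G : (RG -> RG) -> Prop)
    (V W : lmodType k) (f : V -> W) : Prop :=
  forall Ob Mor, CG_closed G Ob Mor -> Mor V W f.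

End LinearGroup.

Section Sheaves.
Variables (k : fieldType) (X : Type) (op : set X -> Prop).

Record presheaf := Presheaf {
  sec : set X -> lmodType k;
  res : forall U V : set X, V `<=` U -> sec U -> sec V;
  res_lin : forall U V (h : V `<=` U), linear (res h);
  res_id : forall U (h : U `<=` U) s, op U -> res h s = s;
  res_comp : forall U V W (h1 : V `<=` U) (h2 : W `<=` V) (h3 : W `<=` U) s,
      op U -> op V -> op W -> res h2 (res h1 s) = res h3 s }.
Arguments sec p _.
Arguments res p {U V} _ _.

Definition is_sheaf (F : presheaf) : Prop :=
  forall (U : set X) (J : Type) (Us : J -> set X)
         (hs : forall j, Us j `<=` U),
    op U -> (forall j, op (Us j)) -> U = \bigcup_j Us j ->
    (forall s t : sec F U, (forall j, res F (hs j) s = res F (hs j) t) -> s = t) /\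
    (forall x : forall j, sec F (Us j),
       (forall i j (hi : Us i `&` Us j `<=` Us i) (hj : Us i `&` Us j `<=` Us j),
          res F hi (x i) = res F hj (x j)) ->
       exists s : sec F U, forall j, res F (hs j) s = x j).

Definition locally_constant_on (A : Type) (O : set X) (f : X -> A) : Prop :=
  forall x, O x -> exists V, [/\ op V, V x, V `<=` O & forall y, V y -> f y = f x].

(* F restricted to the open set U is isomorphic to the constant sheaf with   *)
(* value A, whose sections over O are the locally constant functions O -> A *)
Definition constant_on (F : presheaf) (U : set X) (A : lmodType k) : Prop :=
  exists phi : forall O, sec F O -> X -> A,
   forall O, op O -> O `<=` U ->
   [/\ forall a (s t : sec F O) y, O y -> phi O (a *: s + t) y = a *: phi O s y + phi O t y,
       forall s, locally_constant_on O (phi O s),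
       forall s, (forall y, O y -> phi O s y = 0) -> s = 0,
       forall f, locally_constant_on O f -> exists s, forall y, O y -> phi O s y = f y &
       forall V (h : V `<=` O) s y, op V -> V y -> phi V (res F h s) y = phi O s y].

(* the stalk of F at x is isomorphic to B: B (with the germ maps) is a colimit *)
(* of the directed system F(U), U open neighbourhood of x                     *)
Definition stalk_iso (F : presheaf) (x : X) (B : lmodType k) : Prop :=
  exists germ : forall U, sec F U -> B,
  [/\ forall U, op U -> U x -> linear (germ U),
      forall U V (h : V `<=` U) s, op U -> op V -> V x -> germ V (res F h s) = germ U s,
      forall b, exists U s, [/\ op U, U x & germ U s = b] &
      forall U s, op U -> U x -> germ U s = 0 ->
        exists V (h : V `<=` U), [/\ op V, V x & res F h s = 0]].

End Sheaves.
Arguments sec {k X op} p _.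
Arguments res {k X op} p {U V} _ _.

Definition G_local_system (k : fieldType) (X : Type) (op : set X -> Prop)
    (RG : vectType k) (G : (RG -> RG) -> Prop) (F : presheaf k op) : Prop :=
  [/\ is_sheaf F,
      (forall U, op U -> CG_obj G (sec F U)),
      (forall U V (h : V `<=` U), op U -> op V -> CG_mor G (res F h)),
      (forall x, exists U A, [/\ op U, U x, CG_obj G A & constant_on F U A]) &
      (forall x, stalk_iso F x (RG : lmodType k))].

(* Main.v *)
Require Import Defs.
From HB Require Import structures.
From mathcomp Require Import all_boot all_order all_algebra.
From mathcomp Require Import all_classical all_reals.
From mathcomp Require Import lra zify.
Set Implicit Arguments. Unset Strict Implicit. Unset Printing Implicit Defensive.
Import Order.TTheory GRing.Theory Num.Theory.
Local Open Scope classical_set_scope.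
Local Open Scope ring_scope.

Section Core.
Variables (k : fieldType).

Lemma linB_ (V W : lmodType k) (f : V -> W) : linear f ->
  forall x y, f (x - y) = f x - f y.
Proof.
move=> hf x y; have := hf (-1) y x; rewrite !scaleN1r => H.
by rewrite addrC H addrC.
Qed.

Lemma lin0_ (V W : lmodType k) (f : V -> W) : linear f -> f 0 = 0.
Proof. by move=> hf; rewrite -(subrr 0) (linB_ hf) subrr. Qed.

Variables (X : Type) (op : set X -> Prop) (F : presheaf k op).
Hypothesis Fs : is_sheaf F.
Hypothesis opI : forall A B, op A -> op B -> op (A `&` B).

Lemma res_pi U V (h h' : V `<=` U) s : res F h s = res F h' s.
Proof. by rewrite (Prop_irrelevance h h'). Qed.

Lemma bij_of_inj_surj (A B : Type) (f : A -> B) :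
  injective f -> (forall b, exists a, f a = b) -> bijective f.
Proof.
move=> fi fs.
exists (fun b => projT1 (cid (fs b))) => [a|b]; last by case: (cid (fs b)).
by apply: fi; case: (cid (fs (f a))).
Qed.

Lemma core (A B N U : set X) (p : X) (A0 : lmodType k) :
  constant_on F U A0 ->
  op A -> op B -> op N -> B `<=` A -> N `<=` A -> N `<=` U -> N p ->
  (forall y, A y -> ~ B y -> y = p) -> (forall y, N y -> y <> p -> B y) ->
  (forall V, op V -> V p -> V `<=` N -> exists y, V y /\ y <> p) ->
  (forall (f : X -> A0), locally_constant_on op (N `&` B) f ->
     forall y1 y2, (N `&` B) y1 -> (N `&` B) y2 -> f y1 = f y2) ->
  forall h : B `<=` A, bijective (res F h).
Proof.
move=> [phi Hphi] opA opB opN BA NA NU Np ABp NBp dens conn h.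
have opO : op (N `&` B) by exact: opI.
have OU : N `&` B `<=` U by move=> y [/NU].
have phiB O s1 s2 y : op O -> O `<=` U -> O y ->
    phi O (s1 - s2) y = phi O s1 y - phi O s2 y.
  move=> oO OU' Oy; have [P1 _ _ _ _] := Hphi O oO OU'.
  by rewrite -[s1 - s2]addrC -scaleN1r P1 // scaleN1r addrC.
have phi0 O y : op O -> O `<=` U -> O y -> phi O 0 y = 0.
  by move=> oO OU' Oy; rewrite -(subrr 0) phiB // subrr.
have AU : A = \bigcup_j (if j then N else B).
  apply/seteqP; split => [y Ay|y [[] _ /=]]; [|exact: NA|exact: BA].
  case: (pselect (B y)) => [By|nBy]; first by exists false.
  by exists true => //=; rewrite (ABp y Ay nBy).
have hs : forall j : bool, (if j then N else B) `<=` A by case.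
have opU : forall j : bool, op (if j then N else B) by case.
have [loc glue] := Fs hs opA opU AU.
apply: bij_of_inj_surj.
- move=> s1 s2 E; apply/eqP; rewrite -subr_eq0; apply/eqP.
  have Ed : res F h (s1 - s2) = 0 by rewrite (linB_ (res_lin h)) E subrr.
  apply: loc => -[]; rewrite (lin0_ (res_lin _)); last by rewrite (res_pi _ h).
  set u := res F _ _.
  have [_ _ P3 _ P5] := Hphi N opN NU.
  have uO y : y <> p -> N y -> phi N u y = 0.
    move=> yp Ny.
    have hO1 : N `&` B `<=` N by move=> ? [].
    have hO2 : N `&` B `<=` B by move=> ? [].
    have hO3 : N `&` B `<=` A by move=> ? [] /NA.
    have [_ _ _ _ P5'] := Hphi (N `&` B) opO OU.
    rewrite -(P5 _ hO1) //; last by split => //; exact: NBp.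
    rewrite /u (res_comp _ _ hO3) // -(res_comp h hO2) // Ed (lin0_ (res_lin _)).
    by apply: phi0 => //; split => //; exact: NBp.
  apply: P3 => y Ny.
  case: (pselect (y = p)) => [->|yp]; last exact: uO.
  have [_ P2 _ _ _] := Hphi N opN NU.
  have [V [oV Vp VN Vc]] := P2 u p Np.
  have [z [Vz zp]] := dens V oV Vp VN.
  by rewrite -(Vc z Vz); apply: uO => //; exact: VN.
- move=> t.
  have hO2 : N `&` B `<=` B by move=> ? [].
  pose f := phi (N `&` B) (res F hO2 t).
  have [_ P2 _ _ P5] := Hphi (N `&` B) opO OU.
  have fc := conn f (P2 _).
  have [y0 [Ny0 y0p]] := dens N opN Np (fun _ x => x).
  have O0 : (N `&` B) y0 by split => //; exact: NBp.
  have [_ _ _ P4 P5N] := Hphi N opN NU.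
  have [sN HsN] := P4 (fun _ => f y0) (fun x Nx => ex_intro _ N (And4 opN Nx (fun _ x => x) (fun _ _ => erefl))).
  have comp O2 (h1 : O2 `<=` N) (h2 : O2 `<=` B) : op O2 -> res F h1 sN = res F h2 t.
    move=> oO2.
    have O2U : O2 `<=` U by move=> y /h1 /NU.
    have [_ _ P3 _ P5'] := Hphi O2 oO2 O2U.
    apply/eqP; rewrite -subr_eq0; apply/eqP; apply: P3 => y O2y.
    have h3 : O2 `<=` N `&` B by move=> z zO; split; [exact: h1|exact: h2].
    rewrite phiB // (P5N _ h1) //.
    rewrite HsN; last exact: h1.
    rewrite -(res_comp hO2 h3 h2) // (P5 _ h3) //.
    by rewrite -/f (fc y0 y) // ?subrr //; exact: h3.
  pose x0 := fun j => if j as j0 return sec F (if j0 then N else B) then sN else t.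
  have Hc : forall i j (hi : (if i then N else B) `&` (if j then N else B) `<=` (if i then N else B))
     (hj : (if i then N else B) `&` (if j then N else B) `<=` (if j then N else B)),
     res F hi (x0 i) = res F hj (x0 j).
    move=> [] [] hi hj /=.
    + exact: res_pi.
    + by apply: comp; exact: opI.
    + by apply/esym/comp; exact: opI.
    + exact: res_pi.
  have [s Hs] := glue x0 Hc.
  by exists s; rewrite (res_pi _ (hs false)); exact: (Hs false).
Qed.

End Core.

Lemma RL (R : realType) (T : Type) (S : set R) (g : R -> T) :
  (forall x z y, S x -> S y -> x < z -> z < y -> S z) ->
  (forall r, S r -> exists2 e, 0 < e & forall r', S r' -> `|r - r'| < e -> g r' = g r) ->
  forall x y, S x -> S y -> x <= y -> g x = g y.
Proof.
move=> Sconv Sloc x y Sx Sy xy.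
have Sin u : x <= u -> u <= y -> S u.
  move=> xu uy; case: (ltgtP x u) xu => // [xu _|<- //].
  case: (ltgtP u y) uy => // [uy _|-> //]; exact: Sconv Sx Sy xu uy.
pose A := [set z | x <= z <= y /\ forall u, x <= u <= z -> g u = g x].
have Ax : A x.
  split; first by rewrite lexx xy.
  by move=> u /andP[h1 h2]; have -> : u = x by apply/eqP; rewrite eq_le h1 h2.
have ubA : ubound A y by move=> z [/andP[]].
have hs : has_sup A by split; [exists x | exists y].
set m := sup A.
have xm : x <= m by exact: sup_upper_bound hs _ Ax.
have my : m <= y by apply: ge_sup => //; exists x.
have [e e0 He] := Sloc m (Sin m xm my).
have [z Az mz] := sup_adherent e0 hs.
rewrite -/m in mz.
have zm : z <= m by exact: sup_upper_bound hs _ Az.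
case: Az => /andP[xz zy] Hz.
have gzx : g z = g x by apply: Hz; rewrite xz lexx.
have gzm : g z = g m.
  apply: He; first exact: Sin.
  rewrite ger0_norm; [lra|lra].
have Hm : forall u, x <= u <= m -> g u = g x.
  move=> u /andP[xu um]; case: (lerP u z) => uz; first by apply: Hz; rewrite xu uz.
  rewrite -gzx gzm; apply: He; first by apply: Sin => //; exact: le_trans um my.
  rewrite ger0_norm; [lra|lra].
case: (ltgtP m y) my => // [mltY _| meq]; last by move=> _; rewrite -meq; apply/esym/Hm; rewrite xm lexx.
exfalso.
pose v := Num.min (m + e / 2) y.
have vy : v <= y by rewrite /v ge_min lexx orbT.
have mv : m < v by rewrite /v lt_min mltY andbT; lra.
have Av : A v.
  split; first by rewrite vy andbT (le_trans xm) // ltW.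
  move=> u /andP[xu uv]; case: (lerP u m) => um; first by apply: Hm; rewrite xu um.
  have uv' : u <= m + e / 2 by apply: le_trans uv _; rewrite /v ge_min lexx.
  have gmx : g m = g x by apply: Hm; rewrite xm lexx.
  rewrite -gmx; apply: He; first by apply: Sin => //; exact: le_trans uv vy.
  rewrite ltr0_norm; [lra|lra].
have := sup_upper_bound hs Av; move: mv; rewrite /m; lra.
Qed.

Section Geo.
Variables (R : realType) (I W : set R).
Hypothesis Iop : open_interval I.
Local Notation X := (hatI I W).
Local Notation hext := (hext I W).

Definition below (a : hext) (x : R) :=
  match a with HNegInf => True | HPt q => hpi q < x | HPosInf => False end.
Definition above (b : hext) (x : R) :=
  match b with HNegInf => False | HPt q => x < hpi q | HPosInf => True end.

Lemma Iconv x y z : I x -> I y -> x <= z -> z <= y -> I z.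
Proof.
case: Iop => a [b ->] [ax xb] [ay yb] xz zy; split.
  by apply: (lt_le_trans ax); rewrite lee_fin.
by apply: (le_lt_trans _ yb); rewrite lee_fin.
Qed.

Lemma Ilow x : I x -> exists2 y, I y & y < x.
Proof.

case: Iop => a [b E]; rewrite E => -[ax xb]; clear E.
case: a ax => [r| |] ax.
- rewrite lte_fin in ax; exists ((r + x) / 2); last lra.
  split; [rewrite lte_fin; lra|apply: (lt_trans _ xb); rewrite lte_fin; lra].
- by [].
- exists (x - 1); last lra.
  split; [exact: ltNyr|apply: (lt_trans _ xb); rewrite lte_fin; lra].
Qed.

Lemma Iup x : I x -> exists2 y, I y & x < y.
Proof.
case: Iop => a [b E]; rewrite E => -[ax xb]; clear E.
case: b xb => [r| |] xb.
- rewrite lte_fin in xb; exists ((r + x) / 2); last lra.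
  split; [apply: (lt_trans ax); rewrite lte_fin; lra|rewrite lte_fin; lra].
- exists (x + 1); last lra.
  split; [apply: (lt_trans ax); rewrite lte_fin; lra|exact: ltry].
- by [].
Qed.

Definition mk (r : R) (Ir : I r) : X :=
  exist _ (r, Ordinal (isT : (1 < 3)%N)) (conj Ir (fun _ => erefl)).

Lemma mk_pi r Ir : hpi (@mk r Ir) = r. Proof. by []. Qed.
Lemma mk_tag r Ir : htag (@mk r Ir) = 1%N. Proof. by []. Qed.

Lemma hatI_eq (s t : X) : hpi s = hpi t -> htag s = htag t -> s = t.
Proof.
case: s => [[x i] Hs]; case: t => [[y j] Ht]; rewrite /hpi /htag /= => exy eij.
subst y; have eij' : i = j by apply: val_inj.
subst j; congr exist; exact: Prop_irrelevance.
Qed.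

Lemma htag_lt3 (s : X) : (htag s < 3)%N. Proof. exact: ltn_ord. Qed.
Lemma hpiI (s : X) : I (hpi s). Proof. exact: (proj2_sig s).1. Qed.
Lemma htagW (s : X) : htag s <> 1%N -> W (hpi s).
Proof.
move=> h; case: (pselect (W (hpi s))) => // nW; exfalso; apply: h.
exact: (proj2_sig s).2.
Qed.

Lemma hlt_trans (s t u : X) : hlt s t -> hlt t u -> hlt s u.
Proof.
rewrite /hlt => -[h1|[e1 t1]] [h2|[e2 t2]].
- by left; exact: lt_trans h2.
- by left; rewrite -e2.
- by left; rewrite e1.
- by right; split; [rewrite e1|exact: ltn_trans t2].
Qed.

Lemma hlt_irr (s : X) : ~ hlt s s.
Proof. by rewrite /hlt => -[|[_]]; rewrite ?ltxx ?ltnn. Qed.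

Lemma hlt_asym (s t : X) : hlt s t -> hlt t s -> False.
Proof. by move=> h1 h2; apply: (hlt_irr (hlt_trans h1 h2)). Qed.

Lemma hlt_total (s t : X) : s = t \/ hlt s t \/ hlt t s.
Proof.
rewrite /hlt; case: (ltgtP (hpi s) (hpi t)) => [l|l|e]; [by right; left; left
  |by right; right; left|].
case: (ltngtP (htag s) (htag t)) => [l|l|e2]; [by right; left; right
  |by right; right; right|].
by left; exact: hatI_eq.
Qed.

Lemma hle_antisym (s t : X) : hle s t -> hle t s -> s = t.
Proof. by move=> [//|h1] [//|h2]; case: (hlt_asym h1 h2). Qed.

Lemma hext_lt_trans (a : hext) (s t : X) : hext_lt a s -> hlt s t -> hext_lt a t.
Proof. by case: a => //= q h1 h2; exact: hlt_trans h2. Qed.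

Lemma hext_gt_trans (b : hext) (s t : X) : hext_gt b t -> hlt s t -> hext_gt b s.
Proof. by case: b => //= q h1 h2; exact: hlt_trans h1. Qed.

Lemma below_lt (a : hext) r Ir : below a r -> hext_lt a (@mk r Ir).
Proof. by case: a => //= q h; left. Qed.

Lemma above_gt (b : hext) r Ir : above b r -> hext_gt b (@mk r Ir).
Proof. by case: b => //= q h; left. Qed.

Lemma lt_below (a : hext) (s : X) : hext_lt a s -> ~ is_left_copy a ->
  (htag s <= 1)%N -> below a (hpi s).
Proof.
case: a => //= q [//|[e tq]] nl ts; exfalso; apply: nl.
have tq0 : htag q = 0%N by lia.
by split; [apply: htagW; rewrite tq0|exact: tq0].
Qed.

Lemma gt_above (b : hext) (s : X) : hext_gt b s -> ~ is_right_copy b ->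
  (1 <= htag s)%N -> above b (hpi s).
Proof.
case: b => //= q [//|[e tq]] nr ts; exfalso; apply: nr.
have q3 := htag_lt3 q.
have tq2 : htag q = 2%N by lia.
by split; [apply: htagW; rewrite tq2|exact: tq2].
Qed.

Lemma lt_below2 (a : hext) (s : X) : hext_lt a s -> htag s = 0%N -> below a (hpi s).
Proof. by case: a => //= q [//|[e tq]] ts; rewrite ts in tq. Qed.

Lemma gt_above2 (b : hext) (s : X) : hext_gt b s -> htag s = 2%N -> above b (hpi s).
Proof.
case: b => //= q [//|[e tq]] ts; have := htag_lt3 q; rewrite ts in tq; lia.
Qed.

Lemma D_low (a : hext) x : I x -> below a x -> exists r, [/\ I r, below a r & r < x].
Proof.
case: a => //= [|q] Ix h.
  by have [y Iy yx] := Ilow Ix; exists y.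
exists ((hpi q + x) / 2); split => //=; [|lra|lra].
by apply: (Iconv (hpiI q) Ix); lra.
Qed.

Lemma D_up (b : hext) x : I x -> above b x -> exists r, [/\ I r, above b r & x < r].
Proof.
case: b => //= [q|] Ix h.
  exists ((hpi q + x) / 2); split => //=; [|lra|lra].
  by apply: (Iconv Ix (hpiI q)); lra.
by have [y Iy yx] := Iup Ix; exists y.
Qed.

Lemma below_open (a : hext) r : below a r ->
  exists2 e, 0 < e & forall r', r - e < r' -> below a r'.
Proof.
case: a => //= [|q] h; first by exists 1.
by exists (r - hpi q); [lra|move=> r' hr; lra].
Qed.

Lemma above_open (b : hext) r : above b r ->
  exists2 e, 0 < e & forall r', r' < r + e -> above b r'.
Proof.
case: b => //= [q|] h; last by exists 1.
by exists (hpi q - r); [lra|move=> r' hr; lra].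
Qed.


Definition bnbhd (U : set X) (s : X) := exists a b : hext,
  [/\ hext_lt a s, hext_gt b s, ~ is_left_copy a, ~ is_right_copy b &
      hinterval a b `<=` U].

Lemma lmax (a1 a2 : hext) : exists a : hext, (a = a1 \/ a = a2) /\
  forall t, hext_lt a t -> hext_lt a1 t /\ hext_lt a2 t.
Proof.
case: a1 => [|x|]; first by exists a2; split; [right|].
- case: a2 => [|y|]; first by exists (HPt x); split; [left|].
  + case: (hlt_total x y) => [->|[xy|yx]].
    * by exists (HPt y); split; [right|].
    * exists (HPt y); split; [by right|move=> t /= yt; split => //].
      exact: hlt_trans yt.
    * exists (HPt x); split; [by left|move=> t /= xt; split => //].
      exact: hlt_trans xt.
  + by exists (@HPosInf R I W); split; [right|].
- by exists (@HPosInf R I W); split; [left|].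
Qed.

Lemma lmin (b1 b2 : hext) : exists b : hext, (b = b1 \/ b = b2) /\
  forall t, hext_gt b t -> hext_gt b1 t /\ hext_gt b2 t.
Proof.
case: b1 => [|x|]; first by exists (@HNegInf R I W); split; [left|].
- case: b2 => [|y|]; first by exists (@HNegInf R I W); split; [right|].
  + case: (hlt_total x y) => [->|[xy|yx]].
    * by exists (HPt y); split; [right|].
    * exists (HPt x); split; [by left|move=> t /= tx; split => //].
      exact: hlt_trans xy.
    * exists (HPt y); split; [by right|move=> t /= ty; split => //].
      exact: hlt_trans yx.
  + by exists (HPt x); split; [left|].
- by exists b2; split; [right|].
Qed.

Lemma G2 (U : set X) : hopen U -> forall s, U s -> bnbhd U s.
Proof.
move=> oU; apply: (oU (fun U => forall s, U s -> bnbhd U s)).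
- move=> H [a [b [-> [_ [nl nr]]]]] s [as_ bs].
  by exists a, b; split.
- by move=> s _; exists (@HNegInf R I W), (@HPosInf R I W); split.
- move=> A B hA hB s [As Bs].
  have [a1 [b1 [l1 g1 nl1 nr1 s1]]] := hA s As.
  have [a2 [b2 [l2 g2 nl2 nr2 s2]]] := hB s Bs.
  have [a [ea Ha]] := lmax a1 a2; have [b [eb Hb]] := lmin b1 b2.
  exists a, b; split.
  + by case: ea => ->.
  + by case: eb => ->.
  + by case: ea => ->.
  + by case: eb => ->.
  + move=> t [/Ha [t1 t2] /Hb [t3 t4]]; split; [exact: s1|exact: s2].
- move=> J Fj hF s [j _ Fs].
  have [a [b [l g nl nr sub]]] := hF j s Fs.
  by exists a, b; split => // t /sub Ft; exists j.
Qed.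

Lemma hopenI (A B : set X) : hopen A -> hopen B -> hopen (A `&` B).
Proof.
move=> oA oB T hb hT hI hU; exact: (hI _ _ (oA T hb hT hI hU) (oB T hb hT hI hU)).
Qed.

Lemma hint_open (a b : hext) : hinterval a b !=set0 -> ~ is_left_copy a ->
  ~ is_right_copy b -> hopen (hinterval a b).
Proof. by move=> ne nl nr T hb _ _ _; apply: hb; exists a, b. Qed.

Lemma hint_conv (a b : hext) y1 u y2 : hinterval a b y1 -> hinterval a b y2 ->
  hlt y1 u -> hlt u y2 -> hinterval a b u.
Proof.
move=> [l1 _] [_ g2] h1 h2; split; [exact: hext_lt_trans h1|exact: hext_gt_trans h2].
Qed.

Lemma D3 (a b : hext) (s : X) : hext_lt a s -> hext_gt b s ->
  ~ is_left_copy a -> ~ is_right_copy b ->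
  exists r (Ir : I r), hext_lt a (@mk r Ir) /\ hext_gt b (@mk r Ir).
Proof.
move=> ls gs nl nr.
have s3 := htag_lt3 s.
have [t0|[t1|t2]] : htag s = 0%N \/ htag s = 1%N \/ htag s = 2%N by lia.
- have [r [Ir br rs]] := D_low (hpiI s) (lt_below2 ls t0).
  exists r, Ir; split; first exact: below_lt.
  by apply: hext_gt_trans gs _; left.
- exists (hpi s), (hpiI s).
  have -> : @mk (hpi s) (hpiI s) = s by apply: hatI_eq; rewrite // mk_tag.
  by [].
- have [r [Ir br rs]] := D_up (hpiI s) (gt_above2 gs t2).
  exists r, Ir; split; last exact: above_gt.
  by apply: hext_lt_trans ls _; left.
Qed.

Lemma CONV (T : Type) (O : set X) (f : X -> T) :
  (forall y1 u y2, O y1 -> O y2 -> hlt y1 u -> hlt u y2 -> O u) ->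
  locally_constant_on (@hopen R I W) O f ->
  forall y1 y2, O y1 -> O y2 -> f y1 = f y2.
Proof.
move=> Oconv lc y1 y2 O1 O2.
have rep y : O y -> exists r (Ir : I r), O (@mk r Ir) /\ f (@mk r Ir) = f y.
  move=> Oy; have [V [oV Vy VO Vc]] := lc y Oy.
  have [a [b [l g nl nr sub]]] := G2 oV Vy.
  have [r [Ir [l' g']]] := D3 l g nl nr.
  have Vm : V (@mk r Ir) by apply: sub.
  by exists r, Ir; split; [exact: VO|exact: Vc].
pose g r := if pselect (I r) is left Ir then f (@mk r Ir) else f y1.
have gE r (Ir : I r) : g r = f (@mk r Ir).
  rewrite /g; case: pselect => [Ir'|//].
  by rewrite (Prop_irrelevance Ir' Ir).
pose S r := exists Ir : I r, O (@mk r Ir).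
have Sconv : forall x z y, S x -> S y -> x < z -> z < y -> S z.
  move=> x z y [Ix Ox] [Iy Oy] xz zy.
  have Iz : I z by apply: (Iconv Ix Iy); apply: ltW.
  exists Iz; apply: (Oconv _ _ _ Ox Oy); by left.
have Sloc : forall r, S r -> exists2 e, 0 < e &
    forall r', S r' -> `|r - r'| < e -> g r' = g r.
  move=> r [Ir Or]; have [V [oV Vy VO Vc]] := lc _ Or.
  have [a [b [l gb nl nr sub]]] := G2 oV Vy.
  have ba := lt_below l nl (isT : (htag (@mk r Ir) <= 1)%N).
  have ab := gt_above gb nr (isT : (1 <= htag (@mk r Ir))%N).
  have [e1 e10 He1] := below_open ba; have [e2 e20 He2] := above_open ab.
  exists (Num.min e1 e2); first by rewrite lt_min e10 e20.
  move=> r' [Ir' Or'] d.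
  have m1 : Num.min e1 e2 <= e1 by rewrite ge_min lexx.
  have m2 : Num.min e1 e2 <= e2 by rewrite ge_min lexx orbT.
  move: d; rewrite ltr_norml => /andP[d1 d2].
  rewrite (gE _ Ir') (gE _ Ir); apply: Vc; apply: sub; split.
    by apply: below_lt; apply: He1; rewrite mk_pi; lra.
  by apply: above_gt; apply: He2; rewrite mk_pi; lra.
have [r1 [Ir1 [Or1 <-]]] := rep _ O1.
have [r2 [Ir2 [Or2 <-]]] := rep _ O2.
rewrite -(gE _ Ir1) -(gE _ Ir2).
have S1 : S r1 by exists Ir1.
have S2 : S r2 by exists Ir2.
case/orP: (le_total r1 r2) => h; first exact: (@RL R T S g Sconv Sloc r1 r2 S1 S2 h).
by apply/esym; exact: (@RL R T S g Sconv Sloc r2 r1 S2 S1 h).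
Qed.


Lemma least_tag (a b : hext) (s : X) : ~ is_left_copy a ->
  least_of (hinterval a b) s -> htag s = 2%N.
Proof.
move=> nl [[as_ bs] Hl'].
  have s3 := htag_lt3 s.
  case: (pselect (htag s = 2%N)) => // t2; exfalso.
  have t1 : (htag s <= 1)%N by lia.
  have [r [Ir br rs]] := D_low (hpiI s) (lt_below as_ nl t1).
  have Hm : hinterval a b (@mk r Ir).
    by split; [exact: below_lt|apply: hext_gt_trans bs _; left].
  case: (Hl' _ Hm) => [e|lt].
    by rewrite e /= ltxx in rs.
  by apply: hlt_asym lt _; left.
Qed.

Lemma greatest_tag (a b : hext) (s : X) : ~ is_right_copy b ->
  greatest_of (hinterval a b) s -> htag s = 0%N.
Proof.
move=> nr [[as_ bs] Hl'].
  have s3 := htag_lt3 s.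
  case: (pselect (htag s = 0%N)) => // t2; exfalso.
  have t1 : (1 <= htag s)%N by lia.
  have [r [Ir br rs]] := D_up (hpiI s) (gt_above bs nr t1).
  have Hm : hinterval a b (@mk r Ir).
    by split; [apply: hext_lt_trans as_ _; left|exact: above_gt].
  case: (Hl' _ Hm) => [e|lt].
    by rewrite -e /= ltxx in rs.
  by apply: hlt_asym lt _; left.
Qed.

Lemma least_step (k : fieldType) (F : presheaf k (@hopen R I W)) :
  is_sheaf F ->
  (forall x : X, exists U (A0 : lmodType k), [/\ hopen U, U x & constant_on F U A0]) ->
  forall (a b : hext) (s : X), ~ is_left_copy a -> ~ is_right_copy b ->
  least_of (hinterval a b) s ->
  forall h : hinterval (HPt s) b `<=` hinterval a b, bijective (res F h).
Proof.
move=> Fs Floc a b s nl nr Hl h.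
have [[as_ bs] Hl'] := Hl.
have ts : htag s = 2%N.
  have s3 := htag_lt3 s.
  case: (pselect (htag s = 2%N)) => // t2; exfalso.
  have t1 : (htag s <= 1)%N by lia.
  have [r [Ir br rs]] := D_low (hpiI s) (lt_below as_ nl t1).
  have Hm : hinterval a b (@mk r Ir).
    by split; [exact: below_lt|apply: hext_gt_trans bs _; left].
  case: (Hl' _ Hm) => [e|lt].
    by rewrite e /= ltxx in rs.
  by apply: hlt_asym lt _; left.
have mlE y : (hinterval a b y /\ y <> s) <-> hinterval (HPt s) b y.
  split.
    move=> [[ay byy] ys]; split => //=.
    by case: (Hl' _ (conj ay byy)) => // e; case: ys.
  move=> [/= sy byy]; split; first by split => //; exact: hext_lt_trans sy.
  by move=> e; rewrite e in sy; exact: hlt_irr sy.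
have [r [Ir br sr]] := D_up (hpiI s) (gt_above2 bs ts).
have opA : hopen (hinterval a b) by apply: hint_open => //; exists s.
have opB : hopen (hinterval (HPt s) b).
  apply: hint_open => //; last by move=> [_ t0]; rewrite ts in t0.
  by exists (@mk r Ir); split; [left|exact: above_gt].
have [U [A0 [oU Us hc]]] := Floc s.
have [a2 [b2 [l2 g2 nl2 nr2 sub2]]] := G2 (hopenI oU opA) (conj Us Hl.1).
pose shat := @mk (hpi s) (hpiI s).
have Nchar y : hlt shat y <-> hle s y.
  split.
    move=> [lt|[e t]]; first by right; left.
    left; apply: hatI_eq => //; have := htag_lt3 y; rewrite ts; move: t.
    rewrite mk_tag; lia.
  move=> [<-|[lt|[e t]]]; first by right; split => //; rewrite mk_tag ts.
    by left.
  by have := htag_lt3 y; rewrite ts in t; lia.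
have NUH y : hinterval (HPt shat) b2 y -> (U `&` hinterval a b) y.
  move=> [/= /Nchar sy gy]; apply: sub2; split => //.
  by case: sy => [<-//|lt]; exact: hext_lt_trans lt.
have Ns : hinterval (HPt shat) b2 s by split => //=; apply/Nchar; left.
have opN : hopen (hinterval (HPt shat) b2).
  by apply: hint_open => //; [exists s|move=> [_]; rewrite mk_tag].
apply: (core Fs (@hopenI) hc opA opB opN _ _ _ Ns).
- by move=> y /mlE[].
- by move=> y /NUH[].
- by move=> y /NUH[].
- move=> y Ay nBy; case: (pselect (y = s)) => // ys.
  by case: nBy; apply/mlE.
- by move=> y /NUH[_ Ay] ys; apply/mlE.
- move=> V oV Vs _.
  have [a3 [b3 [l3 g3 nl3 nr3 sub3]]] := G2 oV Vs.
  have [r' [Ir' br' sr']] := D_up (hpiI s) (gt_above2 g3 ts).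
  exists (@mk r' Ir'); split.
    by apply: sub3; split; [apply: hext_lt_trans l3 _; left|exact: above_gt].
  by move=> e; rewrite -e /= ltxx in sr'.
- move=> f lcf; apply: (CONV _ lcf).
  move=> y1 u y2 [N1 B1] [N2 B2] h1 h2; split; exact: hint_conv h1 h2.
Qed.

Lemma greatest_step (k : fieldType) (F : presheaf k (@hopen R I W)) :
  is_sheaf F ->
  (forall x : X, exists U (A0 : lmodType k), [/\ hopen U, U x & constant_on F U A0]) ->
  forall (a b : hext) (s : X), ~ is_left_copy a -> ~ is_right_copy b ->
  greatest_of (hinterval a b) s ->
  forall h : hinterval a (HPt s) `<=` hinterval a b, bijective (res F h).
Proof.
move=> Fs Floc a b s nl nr Hl h.
have [[as_ bs] Hl'] := Hl.
have ts : htag s = 0%N.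
  have s3 := htag_lt3 s.
  case: (pselect (htag s = 0%N)) => // t2; exfalso.
  have t1 : (1 <= htag s)%N by lia.
  have [r [Ir br rs]] := D_up (hpiI s) (gt_above bs nr t1).
  have Hm : hinterval a b (@mk r Ir).
    by split; [apply: hext_lt_trans as_ _; left|exact: above_gt].
  case: (Hl' _ Hm) => [e|lt].
    by rewrite -e /= ltxx in rs.
  by apply: hlt_asym lt _; left.
have mlE y : (hinterval a b y /\ y <> s) <-> hinterval a (HPt s) y.
  split.
    move=> [[ay byy] ys]; split => //=.
    by case: (Hl' _ (conj ay byy)) => // e; case: ys.
  move=> [/= ay ys]; split; first by split => //; exact: hext_gt_trans ys.
  by move=> e; rewrite e in ys; exact: hlt_irr ys.
have [r [Ir br sr]] := D_low (hpiI s) (lt_below2 as_ ts).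
have opA : hopen (hinterval a b) by apply: hint_open => //; exists s.
have opB : hopen (hinterval a (HPt s)).
  apply: hint_open => //; last by move=> [_ t0]; rewrite ts in t0.
  by exists (@mk r Ir); split; [exact: below_lt|left].
have [U [A0 [oU Us hc]]] := Floc s.
have [a2 [b2 [l2 g2 nl2 nr2 sub2]]] := G2 (hopenI oU opA) (conj Us Hl.1).
pose shat := @mk (hpi s) (hpiI s).
have Nchar y : hlt y shat <-> hle y s.
  split.
    move=> [lt|[e t]]; first by right; left.
    left; apply: hatI_eq => //; move: t; rewrite mk_tag ts; lia.
  move=> [->|[lt|[e t]]]; first by right; split => //; rewrite mk_tag ts.
    by left.
  by rewrite ts in t.
have NUH y : hinterval a2 (HPt shat) y -> (U `&` hinterval a b) y.
  move=> [/= gy /Nchar sy]; apply: sub2; split => //.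
  by case: sy => [->//|lt]; exact: hext_gt_trans lt.
have Ns : hinterval a2 (HPt shat) s by split => //=; apply/Nchar; left.
have opN : hopen (hinterval a2 (HPt shat)).
  by apply: hint_open => //; [exists s|move=> [_]; rewrite mk_tag].
apply: (core Fs (@hopenI) hc opA opB opN _ _ _ Ns).
- by move=> y /mlE[].
- by move=> y /NUH[].
- by move=> y /NUH[].
- move=> y Ay nBy; case: (pselect (y = s)) => // ys.
  by case: nBy; apply/mlE.
- by move=> y /NUH[_ Ay] ys; apply/mlE.
- move=> V oV Vs _.
  have [a3 [b3 [l3 g3 nl3 nr3 sub3]]] := G2 oV Vs.
  have [r' [Ir' br' sr']] := D_low (hpiI s) (lt_below2 l3 ts).
  exists (@mk r' Ir'); split.
    by apply: sub3; split; [exact: below_lt|apply: hext_gt_trans g3 _; left].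
  by move=> e; rewrite -e /= ltxx in sr'.
- move=> f lcf; apply: (CONV _ lcf).
  move=> y1 u y2 [N1 B1] [N2 B2] h1 h2; split; exact: hint_conv h1 h2.
Qed.

End Geo.

Lemma res_transport (k : fieldType) (X : Type) (op : set X -> Prop) (F : presheaf k op)
  (A B B' : set X) (e : B' = B) (h : B `<=` A) (h' : B' `<=` A) :
  bijective (res F h) -> bijective (res F h').
Proof. by subst B'; rewrite (Prop_irrelevance h' h). Qed.

Unset Implicit Arguments.
Set Strict Implicit.

Theorem lemma3p4 (R : realType) (I W : set R)
    (k : fieldType) (RG : vectType k) (G : (RG -> RG) -> Prop)
    (F : presheaf k (@hopen R I W)) :
  open_interval I -> W `<=` I -> countable W ->
  linear_group G ->
  G_local_system G F ->
  forall H : set (hatI I W), basis_interval H ->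
    bijective (res F (@trim_sub R I W H)).
Proof.
move=> Iop WI cW lg [Fs _ _ Floc _] H [a [b [HE [Hne [nl nr]]]]].
have Floc' : forall x, exists U (A0 : lmodType k),
    [/\ hopen U, U x & constant_on F U A0].
  by move=> x; have [U [A0 [? ? _ ?]]] := Floc x; exists U, A0.
subst H.
have opH : hopen (hinterval a b) by exact: hint_open.
have uniqL y s : least_of (hinterval a b) y -> least_of (hinterval a b) s -> y = s.
  by move=> [Hy Ly] [Hs Ls]; apply: hle_antisym (Ly _ Hs) (Ls _ Hy).
have uniqG y s : greatest_of (hinterval a b) y -> greatest_of (hinterval a b) s -> y = s.
  by move=> [Hy Ly] [Hs Ls]; apply: hle_antisym (Ls _ Hy) (Ly _ Hs).
case: (pselect (exists s, least_of (hinterval a b) s)) => [[s Hs]|nls];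
case: (pselect (exists t, greatest_of (hinterval a b) t)) => [[t Ht]|ngt].
- have ts := least_tag Iop nl Hs; have tt := greatest_tag Iop nr Ht.
  have st : hlt s t.
    case: (Hs.2 _ Ht.1) => [e|//]; by rewrite e tt in ts.
  have h1 : hinterval (HPt s) b `<=` hinterval a b.
    move=> y [/= sy yb]; split => //; exact: hext_lt_trans Hs.1.1 sy.
  have h2 : hinterval (HPt s) (HPt t) `<=` hinterval (HPt s) b.
    move=> y [/= sy yt]; split => //; exact: hext_gt_trans Ht.1.2 yt.
  have h3 : hinterval (HPt s) (HPt t) `<=` hinterval a b by move=> y /h2 /h1.
  have nl' : ~ is_left_copy (HPt s) by move=> [_ t0]; rewrite ts in t0.
  have nr' : ~ is_right_copy (HPt t) by move=> [_ t0]; rewrite tt in t0.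
  have Mt : hinterval (HPt s) b t by split => //; exact: Ht.1.2.
  have GM : greatest_of (hinterval (HPt s) b) t.
    by split => // z /h1 /Ht.2.
  have b1 := least_step Iop Fs Floc' nl nr Hs h1.
  have b2 := greatest_step Iop Fs Floc' nl' nr GM h2.
  have opM : hopen (hinterval (HPt s) b) by apply: hint_open => //; exists t.
  have pst : hpi s < hpi t.
    by case: st => [//|[_ l]]; rewrite ts tt in l.
  have [r [Ir br sr]] := D_up Iop (hpiI s) (pst : above (HPt t) (hpi s)).
  have opB : hopen (hinterval (HPt s) (HPt t)).
    by apply: hint_open => //; exists (@mk R I W r Ir); split; [left|exact: above_gt].
  have b3 : bijective (res F h3).
    apply: (eq_bij (bij_comp b2 b1)) => x /=.
    by apply: res_comp.
  apply: res_transport b3; apply/seteqP; split => y.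
    move=> [Hy [nL nG]]; split => /=.
      case: (Hs.2 _ Hy) => [e|//]; case: nL; rewrite -e //.
    case: (Ht.2 _ Hy) => [e|//]; case: nG; rewrite e //.
  move=> By; have Hy := h3 _ By; split => //; split.
    by move=> /(uniqL _ _)/(_ Hs) e; rewrite e in By; case: By => /= /hlt_irr.
  by move=> /(uniqG _ _)/(_ Ht) e; rewrite e in By; case: By => _ /= /hlt_irr.
- have ts := least_tag Iop nl Hs.
  have h1 : hinterval (HPt s) b `<=` hinterval a b.
    move=> y [/= sy yb]; split => //; exact: hext_lt_trans Hs.1.1 sy.
  apply: res_transport (least_step Iop Fs Floc' nl nr Hs h1); apply/seteqP; split => y.
    move=> [[ay yb] [nL nG]]; split => //=.
    case: (Hs.2 _ (conj ay yb)) => [e|//]; case: nL; rewrite -e //.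
  move=> By; have Hy := h1 _ By; split => //; split.
    by move=> /(uniqL _ _)/(_ Hs) e; rewrite e in By; case: By => /= /hlt_irr.
  by move=> Gy; apply: ngt; exists y.
- have tt := greatest_tag Iop nr Ht.
  have h1 : hinterval a (HPt t) `<=` hinterval a b.
    move=> y [/= ay yt]; split => //; exact: hext_gt_trans Ht.1.2 yt.
  apply: res_transport (greatest_step Iop Fs Floc' nl nr Ht h1); apply/seteqP; split => y.
    move=> [[ay yb] [nL nG]]; split => //=.
    case: (Ht.2 _ (conj ay yb)) => [e|//]; case: nG; rewrite e //.
  move=> By; have Hy := h1 _ By; split => //; split.
    by move=> Ly; apply: nls; exists y.
  by move=> /(uniqG _ _)/(_ Ht) e; rewrite e in By; case: By => _ /= /hlt_irr.
- have h0 : hinterval a b `<=` hinterval a b by [].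
  have b0 : bijective (res F h0).
    by exists id => x; rewrite res_id.
  apply: res_transport b0; apply/seteqP; split => y; first by case.
  move=> Hy; split => //; split.
    by move=> Ly; apply: nls; exists y.
  by move=> Gy; apply: ngt; exists y.
Qed.
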